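(* Let $T$ be a normal spanning tree of a connected graph $G$ with $n$ vertices and $m$ edges. Let $r,s\in\mathbb{I}^{m-n+1}$ with $r\ne s$, and suppose there exist $\Phi=(G,\varphi)\in\mathcal{A}_T(r)$ and $\Psi=(G,\psi)\in\mathcal{A}_T(s)$ such that $\Re(\varphi(C))=\Re(\psi(C))$ for every cycle $C$ of $G$. Then $\mathcal{A}_T(r)$ and $\mathcal{A}_T(s)$ are $\mathbb{T}$-cospectral, i.e. all $\mathbb{T}$-gain graphs in $\mathcal{A}_T(r)\cup\mathcal{A}_T(s)$ have adjacency matrices with the same spectrum.
   Context: Graphs are finite, simple and undirected. $\mathbb{T}=\{z\in\mathbb{C}:|z|=1\}$, $\mathbb{I}=[0,2\pi)$. A $\mathbb{T}$-gain on $G$ is a map $\varphi$ from oriented edges to $\mathbb{T}$ with $\varphi(\overrightarrow{e_{ts}})=\varphi(\overrightarrow{e_{st}})^{-1}$; $A(\Phi)$ for $\Phi=(G,\varphi)$ is the Hermitian matrix with $(s,t)$ entry $\varphi(\overrightarrow{e_{st}})$ if $v_s\sim v_t$, else $0$; $\mathcal{T}_G$ is the set of all $\mathbb{T}$-gain graphs on $G$. The gain of a directed cycle is the product of gains of its oriented edges; the two directions of a cycle $C$ have conjugate gains, so $\Re(\varphi(C))$ is well defined. A rooted spanning tree $T$ with root $v_r$ induces the tree order ($v_x\le v_y$ iff $v_x$ is on the $T$-path from $v_r$ to $v_y$); $T$ is normal if adjacent vertices of $G$ are always comparable. The suitably oriented graph $\overrightarrow{G_T}$ orients each edge $e_{st}$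 with $v_s\le v_t$ as $\overrightarrow{e_{st}}$ if $e_{st}\in E(T)$ and as $\overrightarrow{e_{ts}}$ otherwise; the $m-n+1$ fundamental cycles of $T$ become directed cycles $\overrightarrow{C_j(T)}$. For $r=(c_1,\dots,c_{m-n+1})\in\mathbb{I}^{m-n+1}$, $\mathcal{A}_T(r)=\{(G,\varphi)\in\mathcal{T}_G:\varphi(\overrightarrow{C_j(T)})=e^{ic_j}\ \forall j\}$. *)

(* Defs.v *)
From mathcomp Require Import all_boot all_order all_algebra.
From mathcomp Require Export complex.
From mathcomp Require Export reals trigo.
Set Implicit Arguments. Unset Strict Implicit. Unset Printing Implicit Defensive.
Import GRing.Theory Num.Theory.
Local Open Scope ring_scope.

Section GainGraphs.
Variable n : nat.
Local Notation V := 'I_n.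

Definition simple_graph (e : rel V) : Prop :=
  symmetric e /\ irreflexive e.

Definition connected_graph (e : rel V) : Prop :=
  forall x y : V, connect e x y.

Definition n_edges (e : rel V) : nat :=
  #|[set p : V * V | e p.1 p.2 && (p.1 < p.2)%N]|.

(* cycles of a graph: sequences of >= 3 distinct vertices, consecutive
   vertices adjacent, last adjacent to first (a cycle together with a
   direction of traversal and a starting point). *)
Definition is_cycle (e : rel V) (c : seq V) : Prop :=
  (3 <= size c)%N /\ ucycle e c.

Definition spanning_tree (e t : rel V) : Prop :=
  symmetric t /\ subrel t e /\ (forall x y : V, connect t x y) /\
  (forall c : seq V, ~ is_cycle t c).

Definition tree_le (t : rel V) (r x y : V) : Prop :=
  exists p : seq V, [/\ path t r p, last r p = y, uniq (r :: p) & x \in r :: p].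

Definition normal_spanning_tree (e t : rel V) (r : V) : Prop :=
  spanning_tree e t /\
  (forall u v : V, e u v -> tree_le t r u v \/ tree_le t r v u).

Variable R : realType.
Local Notation C := R[i].

(* T-gain on the graph e: phi s t is the gain of the oriented edge s -> t *)
Definition T_gain (e : rel V) (phi : V -> V -> C) : Prop :=
  forall s t : V, e s t -> `|phi s t| = 1 /\ phi t s = (phi s t)^-1.

Definition gain_adj (e : rel V) (phi : V -> V -> C) : 'M[C]_n :=
  \matrix_(s, t) (if e s t then phi s t else 0).

Definition cycle_gain (phi : V -> V -> C) (c : seq V) : C :=
  \prod_(p <- zip c (rot 1 c)) phi p.1 p.2.

(* oriented non-tree edges (s,t) of the suitably oriented graph:
   {s,t} not in T, s <= t in the tree order; it is oriented t -> s, and its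
   fundamental cycle is s -> (tree path) -> t -> s. *)
Definition nontree_pair (e t : rel V) (r : V) (p : V * V) : Prop :=
  [/\ e p.1 p.2, ~~ t p.1 p.2 & tree_le t r p.1 p.2].

Definition fund_cycle_gain_is (t : rel V) (phi : V -> V -> C) (st : V * V)
    (z : C) : Prop :=
  forall q : seq V, path t st.1 q -> last st.1 q = st.2 -> uniq (st.1 :: q) ->
    cycle_gain phi (st.1 :: q) = z.

(* A_T(r): the gain graphs whose j-th fundamental cycle has gain e^{i c_j};
   cyc enumerates the fundamental cycles via their non-tree pairs. *)
Definition A_T (e t : rel V) (k : nat) (cyc : 'I_k -> V * V) (c : 'I_k -> R)
    (phi : V -> V -> C) : Prop :=
  T_gain e phi /\
  forall j : 'I_k, fund_cycle_gain_is t phi (cyc j) (cos (c j) +i* sin (c j))%C.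

Definition in_I (k : nat) (c : 'I_k -> R) : Prop :=
  forall j, 0 <= c j < 2 * pi.

End GainGraphs.

(* Main.v *)
Require Import Defs.
From mathcomp Require Import all_boot all_order all_algebra.
From mathcomp Require Import complex reals trigo.
From mathcomp Require Import fingroup perm.
Import GRing.Theory Num.Theory.
Local Open Scope ring_scope.
Set Implicit Arguments. Unset Strict Implicit. Unset Printing Implicit Defensive.
From mathcomp Require Import ring.
Section Perms.
Variable n : nat.
Local Notation V := 'I_n.

Lemma porbit_step (s : {perm V}) a x : (s x \in porbit s a) = (x \in porbit s a).
Proof.
by rewrite porbit_sym -(expg1 s) porbit_perm expg1 porbit_sym.
Qed.

Lemma porbit_stepV (s : {perm V}) a x : (s^-1%g x \in porbit s a) = (x \in porbit s a).
Proof. by rewrite -porbitV porbit_step. Qed.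

Definition tauf (s : {perm V}) a (x : V) : V :=
  if x \in porbit s a then s^-1%g x else x.

Lemma tauf_inj s a : injective (tauf s a).
Proof.
move=> x y; rewrite /tauf.
case: ifP => hx; case: ifP => hy //.
- exact: perm_inj.
- by move=> E; move: hy; rewrite -E porbit_stepV hx.
- by move=> E; move: hx; rewrite E porbit_stepV hy.
Qed.

Definition tau s a : {perm V} := perm (@tauf_inj s a).
Definition revp (s : {perm V}) a : {perm V} := (s * tau s a * tau s a)%g.

Lemma tauE s a x : tau s a x = tauf s a x.
Proof. by rewrite permE. Qed.

Lemma revpE s a x : revp s a x = if x \in porbit s a then s^-1%g x else s x.
Proof.
rewrite /revp !permM !tauE /tauf porbit_step.
have [hx|hx] := boolP (x \in porbit s a).
  by rewrite permK hx.
by rewrite porbit_step (negbTE hx).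
Qed.

Lemma odd_revp s a : odd_perm (revp s a) = odd_perm s.
Proof. by rewrite /revp !odd_permM -addbA addbb addbF. Qed.

Lemma porbit_eqX (s1 s2 : {perm V}) x :
  (forall i, iter i s1 x = iter i s2 x) -> porbit s1 x = porbit s2 x.
Proof.
move=> H; apply/porbit_setP => y.
by apply/porbitP/porbitP => -[i ->]; exists i; rewrite !permX H.
Qed.

Lemma porbit_revp s a x : porbit (revp s a) x = porbit s x.
Proof.
case: (boolP (x \in porbit s a)) => hx.
  transitivity (porbit s^-1 x); last exact: porbitV.
  apply: porbit_eqX => i.
  have hi : iter i (s^-1)%g x \in porbit s a.
    by elim: i => //= i IH; rewrite porbit_stepV.
  elim: i hi => //= i IH hi.
  have hi' : iter i s^-1%g x \in porbit s a by rewrite -(porbit_stepV s).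
  by rewrite IH // revpE hi'.
apply: porbit_eqX => i.
have hi : iter i s x \notin porbit s a.
  by elim: i => //= i IH; rewrite porbit_step.
elim: i hi => //= i IH hi.
have hi' : iter i s x \notin porbit s a by rewrite -(porbit_step s).
by rewrite IH // revpE (negbTE hi').
Qed.

Lemma revpK s a : revp (revp s a) a = s.
Proof.
apply/permP => x; rewrite revpE porbit_revp.
case: ifP => hx; last by rewrite revpE hx.
apply: (@perm_inj _ (revp s a)); rewrite permKV revpE porbit_step hx.
by rewrite permK.
Qed.

End Perms.
Lemma unit_inv_conj (R : realType) (z : R[i]) : `|z| = 1 -> z^-1 = (z^*)%C.
Proof.
move=> hz; have z0 : z != 0 by rewrite -normr_eq0 hz oner_eq0.
have H : z * (z^*)%C = 1.
  have := add_Re2_Im2 z; rewrite hz expr1n.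
  case: z {hz z0} => a b /= <-.
  apply/eqP; rewrite eq_complex /=; apply/andP; split; apply/eqP; ring.
by rewrite -[(z^*)%C]mul1r -(mulVf z0) -mulrA H mulr1.
Qed.

Section PartB.
Variables (R : realType) (n : nat) (e : rel 'I_n).
Hypothesis esym : symmetric e.
Hypothesis eirr : irreflexive e.
Local Notation V := 'I_n.
Local Notation C := R[i].

Definition pconj (p : {poly C}) : {poly C} := map_poly (@conjc R) p.
Definition Aent (phi : V -> V -> C) i j : C := if e i j then phi i j else 0.
Definition Mx (phi : V -> V -> C) := char_poly_mx (gain_adj e phi).

Lemma Mx_entry phi i j :
  Mx phi i j = if i == j then 'X else - (Aent phi i j)%:P.
Proof.
rewrite /Mx /Aent !mxE; case: eqP => [<-|_]; first by rewrite eirr subr0.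
by rewrite sub0r.
Qed.

Lemma Aent_herm phi (Tg : T_gain e phi) i j : Aent phi j i = ((Aent phi i j)^*)%C.
Proof.
rewrite /Aent esym; case: ifP => eij; last by rewrite conjc0.
have [h1 h2] := Tg i j eij; by rewrite h2 unit_inv_conj.
Qed.

Lemma Mx_herm phi (Tg : T_gain e phi) i j : Mx phi j i = pconj (Mx phi i j).
Proof.
rewrite !Mx_entry eq_sym; case: eqP => [_|_]; first by rewrite /pconj map_polyX.
by rewrite /pconj raddfN /= map_polyC /= Aent_herm.
Qed.


Lemma porbit_nofix (s : {perm V}) a i :
  (2 <= #|porbit s a|)%N -> i \in porbit s a -> s i != i.
Proof.
move=> k2 hi; apply/eqP => si.
have E : porbit s i = porbit s a by apply/eqP; rewrite eq_porbit_mem.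
have : porbit s i \subset [set i].
  apply/subsetP => y /porbitP [j ->]; rewrite permX inE.
  by apply/eqP; elim: j => //= j ->.
move/subset_leq_card; rewrite cards1 E => h.
by have := leq_trans k2 h.
Qed.

Lemma traject_prod (s : {perm V}) a (F : V -> {poly C}) :
  \prod_(i in porbit s a) F i = \prod_(i <- traject s a #|porbit s a|) F i.
Proof.
rewrite big_uniq ?uniq_traject_porbit //; apply: eq_bigl => i.
by rewrite porbit_traject.
Qed.

Lemma traject_prodC (s : {perm V}) a (F : V -> C) :
  \prod_(i in porbit s a) F i = \prod_(i <- traject s a #|porbit s a|) F i.
Proof.
rewrite big_uniq ?uniq_traject_porbit //; apply: eq_bigl => i.
by rewrite porbit_traject.
Qed.

Lemma map_traject (T : Type) (f : T -> T) x m :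
  map f (traject f x m) = traject f (f x) m.
Proof. by elim: m x => //= m IH x; rewrite IH. Qed.

Lemma rot_traject (s : {perm V}) a :
  rot 1 (traject s a #|porbit s a|) = map s (traject s a #|porbit s a|).
Proof.
have := iter_porbit s a; have := card_porbit_neq0 s a.
case: #|porbit s a| => // k _ hk.
by rewrite map_traject trajectS rot1_cons trajectSr -iterSr hk.
Qed.

Lemma cycle_gain_traject (chi : V -> V -> C) (s : {perm V}) a :
  cycle_gain chi (traject s a #|porbit s a|) =
  \prod_(i <- traject s a #|porbit s a|) chi i (s i).
Proof.
rewrite /cycle_gain rot_traject -{1}[traject _ _ _]map_id zip_map big_map.
by [].
Qed.

Lemma is_cycle_traject (s : {perm V}) a :
  (3 <= #|porbit s a|)%N -> (forall i, i \in porbit s a -> e i (s i)) ->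
  is_cycle e (traject s a #|porbit s a|).
Proof.
move=> k3 he; split; first by rewrite size_traject.
rewrite /ucycle uniq_traject_porbit andbT.
have := iter_porbit s a; have := card_porbit_neq0 s a.
case: #|porbit s a| => // k _ hk.
have E : rcons (traject s (s a) k) a = traject s (s a) k.+1.
  by rewrite trajectSr -iterSr hk.
rewrite trajectS /= E.
apply: (@sub_in_path _ (mem (porbit s a)) (frel s)).
- by move=> x y hx _ /eqP <-; apply: he.
- apply/allP => y; rewrite inE => /predU1P [->|/trajectP [j _ ->]].
    exact: porbit_id.
  rewrite -iterSr -permX; exact: mem_porbit.
- exact: (@fpath_traject _ (fun x => s x) a k.+1).
Qed.

Definition Gm (chi : V -> V -> C) (s : {perm V}) a :=
  \prod_(i in porbit s a) Mx chi i (s i).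

Lemma Gm_long chi (s : {perm V}) a : (2 <= #|porbit s a|)%N ->
  Gm chi s a = (-1) ^+ #|porbit s a| *
     (\prod_(i in porbit s a) Aent chi i (s i))%:P.
Proof.
move=> k2; rewrite /Gm rmorph_prod -prodrN; apply: eq_bigr => i hi.
by rewrite Mx_entry eq_sym (negbTE (porbit_nofix k2 hi)).
Qed.


Lemma AA_conj chi (Tg : T_gain e chi) i j :
  Aent chi i j * Aent chi j i = (e i j)%:R.
Proof.
rewrite /Aent (esym j i); case: ifP => eij; last by rewrite mul0r.
have [h1 h2] := Tg i j eij.
by rewrite h2 mulfV // -normr_eq0 h1 oner_eq0.
Qed.

Lemma Re_add (x y : C) : 'Re x = 'Re y -> x + (x^*)%C = y + (y^*)%C.
Proof. by move=> h; rewrite !addcJ !complexRe h. Qed.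

Variables phi psi : V -> V -> C.
Hypotheses (Tphi : T_gain e phi) (Tpsi : T_gain e psi).
Hypothesis Hre : forall c, is_cycle e c ->
  'Re (cycle_gain phi c) = 'Re (cycle_gain psi c).

Lemma Key (s : {perm V}) a :
  Gm phi s a + pconj (Gm phi s a) = Gm psi s a + pconj (Gm psi s a).
Proof.
have [k1|k2] := leqP #|porbit s a| 1.
  suff -> : Gm phi s a = Gm psi s a by [].
  have k1' : #|porbit s a| = 1%N.
    by apply/eqP; rewrite eqn_leq k1 lt0n card_porbit_neq0.
  have sa : s a = a by have := iter_porbit s a; rewrite k1'.
  by rewrite /Gm !traject_prod k1' /= !big_seq1 !Mx_entry sa eqxx.
rewrite !Gm_long //.
set P := fun chi => \prod_(i in porbit s a) Aent chi i (s i).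
suff H : P phi + ((P phi)^*)%C = P psi + ((P psi)^*)%C.
  have E : forall c : C, (-1) ^+ #|porbit s a| * c%:P + pconj ((-1) ^+ #|porbit s a| * c%:P)
     = ((-1) ^+ #|porbit s a| * (c + (c^*)%C))%:P.
    move=> c; rewrite -(rmorphN1 (@polyC C)) -(rmorphXn (@polyC C)) -polyCM /pconj map_polyC /=.
    by rewrite -polyCD rmorphM rmorphXn rmorphN1 mulrDr.
  by rewrite !E -/(P phi) -/(P psi) H.
have [k2'|k3] := leqP #|porbit s a| 2.
  suff -> : P phi = P psi by [].
  have k2e : #|porbit s a| = 2%N by apply/eqP; rewrite eqn_leq k2' k2.
  have ssa : s (s a) = a by have := iter_porbit s a; rewrite k2e.
  rewrite /P !traject_prodC k2e.
  have -> : traject s a 2 = [:: a; s a] by [].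
  by rewrite !big_cons !big_nil !mulr1 ssa !AA_conj.
have [hall|hnot] := boolP [forall i, (i \in porbit s a) ==> e i (s i)].
  have he : forall i, i \in porbit s a -> e i (s i).
    by move=> i hi; move/forallP: hall => /(_ i); rewrite hi.
  have EP : forall chi, P chi = cycle_gain chi (traject s a #|porbit s a|).
    move=> chi; rewrite cycle_gain_traject /P traject_prodC.
    apply: eq_big_seq => i; rewrite -porbit_traject => hi.
    by rewrite /Aent he.
  rewrite (EP phi) (EP psi); apply: Re_add; apply: Hre; exact: is_cycle_traject.
move/forallPn: hnot => -[j]; rewrite negb_imply; case/andP => hi hne.
have E0 : forall chi, P chi = 0.
  by move=> chi; rewrite /P (bigD1 j) //= /Aent (negbTE hne) mul0r.
by rewrite (E0 phi) (E0 psi).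
Qed.


Definition cnd (S : {set V}) (s : {perm V}) i :=
  [exists j, (j \in porbit s i) && (j \in S)].

Definition mixt (S : {set V}) (s : {perm V}) i : {poly C} :=
  if cnd S s i then Mx psi i (s i) else Mx phi i (s i).

Definition Hs S : {poly C} :=
  \sum_(s : 'S_n) (-1) ^+ s * \prod_i mixt S s i.

Lemma Hs0 : Hs set0 = \det (Mx phi).
Proof.
rewrite /Hs /determinant; apply: eq_bigr => s _; congr (_ * _).
apply: eq_bigr => i _; rewrite /mixt /cnd.
by case: existsP => // -[j /andP [_]]; rewrite inE.
Qed.

Lemma HsT : Hs setT = \det (Mx psi).
Proof.
rewrite /Hs /determinant; apply: eq_bigr => s _; congr (_ * _).
apply: eq_bigr => i _; rewrite /mixt /cnd.
case: existsP => // -[]; exists i; by rewrite porbit_id in_setT.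
Qed.

Lemma cnd_U1 S a s i : cnd (a |: S) s i = (a \in porbit s i) || cnd S s i.
Proof.
apply/existsP/orP.
  move=> [j /andP [hj]]; rewrite in_setU1 => /orP [/eqP E|hS].
    by left; rewrite -E.
  by right; apply/existsP; exists j; rewrite hj hS.
move=> [h|/existsP [j /andP [hj hS]]].
  by exists a; rewrite h setU11.
by exists j; rewrite hj in_setU1 hS orbT.
Qed.

Lemma cnd_revp S s a i : cnd S (revp s a) i = cnd S s i.
Proof. by rewrite /cnd porbit_revp. Qed.

Definition Dt S a (s : {perm V}) : {poly C} :=
  (-1) ^+ s * (\prod_(i | i \notin porbit s a) mixt S s i) *
  (if cnd S s a then 0 else Gm phi s a - Gm psi s a).

Lemma term_diff S a (s : {perm V}) :
  (-1) ^+ s * \prod_i mixt S s i - (-1) ^+ s * \prod_i mixt (a |: S) s i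
  = Dt S a s.
Proof.
rewrite /Dt (bigID (mem (porbit s a))) /= [X in _ - _ * X](bigID (mem (porbit s a))) /=.
have Eout : \prod_(i | ~~ (i \in porbit s a)) mixt (a |: S) s i =
            \prod_(i | ~~ (i \in porbit s a)) mixt S s i.
  apply: eq_bigr => i hi; rewrite /mixt cnd_U1 porbit_sym (negbTE hi) //.
have Ein : forall X, \prod_(i | i \in porbit s a) mixt X s i =
     if cnd X s a then Gm psi s a else Gm phi s a.
  move=> X; rewrite /Gm; case: ifP => hc; apply: eq_bigr => i hi;
  have Eo : porbit s i = porbit s a by apply/eqP; rewrite eq_porbit_mem.
    by rewrite /mixt /cnd Eo -/(cnd X s a) hc.
  by rewrite /mixt /cnd Eo -/(cnd X s a) hc.
rewrite Eout !Ein cnd_U1 porbit_id /=.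
case: ifP => _; first by rewrite subrr mulr0.
by rewrite -mulrBr -mulrBl -mulrA [X in _ = _ * X]mulrC.
Qed.

Lemma Gm_revp chi (Tg : T_gain e chi) s a :
  Gm chi (revp s a) a = pconj (Gm chi s a).
Proof.
rewrite /Gm porbit_revp /pconj rmorph_prod.
rewrite (reindex_inj (@perm_inj _ s)) /=.
apply: eq_big => [i|i hi]; first by rewrite porbit_step.
rewrite revpE hi permK.
by apply: Mx_herm.
Qed.

Lemma Dt_revp S a s : Dt S a s + Dt S a (revp s a) = 0.
Proof.
rewrite /Dt odd_revp cnd_revp porbit_revp (Gm_revp Tphi) (Gm_revp Tpsi).
have -> : \prod_(i | i \notin porbit s a) mixt S (revp s a) i =
          \prod_(i | i \notin porbit s a) mixt S s i.
  apply: eq_bigr => i hi; rewrite /mixt cnd_revp revpE (negbTE hi) //.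
rewrite -mulrDr; case: ifP => _; first by rewrite addr0 mulr0.
have K := Key s a.
suff -> : Gm phi s a - Gm psi s a + (pconj (Gm phi s a) - pconj (Gm psi s a)) = 0.
  by rewrite mulr0.
rewrite addrACA -opprD K; exact: subrr.
Qed.

Lemma poly_double0 (p : {poly C}) : p + p = 0 -> p = 0.
Proof.
move=> h; apply/polyP => k; have := congr1 (fun q : {poly C} => q`_k) h.
rewrite coefD coef0 -mulr2n => /eqP; rewrite mulrn_eq0 /= => /eqP ->.
reflexivity.
Qed.

Lemma Hs_step S a : Hs S = Hs (a |: S).
Proof.
apply/eqP; rewrite -subr_eq0; apply/eqP.
rewrite /Hs -sumrB.
under eq_bigr => s _ do rewrite term_diff.
apply: poly_double0.
have inj : injective (fun s : 'S_n => revp s a).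
  by apply: (@can_inj _ _ _ (fun s : 'S_n => revp s a)) => s; exact: revpK.
rewrite {2}(reindex_inj inj) /= -big_split /=.
by apply: big1 => s _; apply: Dt_revp.
Qed.

Lemma partB : char_poly (gain_adj e phi) = char_poly (gain_adj e psi).
Proof.
rewrite /char_poly -/(Mx phi) -/(Mx psi) -Hs0 -HsT.
suff H : forall l : seq V, Hs set0 = Hs [set x in l].
  rewrite (H (enum V)); congr Hs; apply/setP => x; by rewrite !inE mem_enum.
elim => [|x l IH]; first by congr Hs; apply/setP => y; rewrite !inE.
rewrite IH (Hs_step _ x); congr Hs; apply/setP => y; by rewrite !inE.
Qed.

End PartB.
Section TreePaths.
Variable n : nat.
Local Notation V := 'I_n.
Variable t : rel V.
Hypothesis tsym : symmetric t.
Hypothesis tirr : irreflexive t.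
Hypothesis nocyc : forall c : seq V, ~ is_cycle t c.

Lemma path_rev_sym x p :
  path t x p -> path t (last x p) (rev (belast x p)).
Proof.
rewrite rev_path => h; rewrite (@eq_path _ _ t) // => a b; exact: tsym.
Qed.

Lemma tree_path_uniq x p q :
  path t x p -> path t x q -> last x p = last x q ->
  uniq (x :: p) -> uniq (x :: q) -> p = q.
Proof.
elim: p x q => [|y p IH] x q.
  case: q => // z q _ _ /= E _ /andP [hx _].
  by move: hx; rewrite E (mem_last z q).
move=> /= /andP [txy py] pq Elast /andP [hxp up] uq.
have xy : x != y by apply: contraNneq hxp => ->; exact: mem_head.
have [yq|yq] := boolP (y \in q); last first.
  have : p = x :: q.
    apply: (IH y) => //=.
    - by rewrite (tsym y x) txy pq.
    - by rewrite inE eq_sym (negbTE xy) yq.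
  by move=> Ep; move: hxp; rewrite Ep !inE eqxx orTb orbT.
move: pq Elast uq; case/splitPr: yq => q1 q2 pq Elast uq.
case: q1 pq Elast uq => [|z q1] pq Elast uq.
  move: pq uq => /= /andP [_ pq2] /andP [_ uq2].
  by congr (_ :: _); apply: (IH y).
exfalso; apply: (nocyc (c := x :: y :: rev (z :: q1))); split.
  by rewrite /= size_rev.
apply/andP; split.
  rewrite /= txy /=.
  rewrite -rev_cons.
  have := pq; rewrite -cat_rcons cat_path => /andP [h _].
  have := path_rev_sym h; rewrite last_rcons belast_rcons.
  by [].
move: uq hxp; rewrite /= !mem_cat !inE !negb_or mem_rev rev_uniq cat_uniq /=.
case/andP => /andP [hxz hxq] /and5P [/and3P [hzq1 hzy _] uq1 hy _ _] /andP [hxy _].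
move: hxq hy; rewrite mem_cat !negb_or => /andP [hxq1 _] /andP [hyq1 _].
by rewrite mem_rev !inE !negb_or hxy hxz eq_sym hzy hzq1 uq1 hxq1 hyq1.
Qed.

End TreePaths.
Lemma similar_charpoly (R : realType) (n : nat) (A B : 'M[R[i]]_n) (w : 'I_n -> R[i]) :
  (forall i, w i != 0) -> (forall i j, A i j * w j = w i * B i j) ->
  char_poly A = char_poly B.
Proof.
move=> w0 hAB.
have E : char_poly_mx A = diag_mx (\row_i (w i)%:P) *m char_poly_mx B *m
                          diag_mx (\row_i ((w i)^-1)%:P).
  apply/matrixP => i j; rewrite mul_mx_diag mul_diag_mx !mxE.
  have -> : A i j = w i * B i j / w j by rewrite -hAB mulfK.
  case: eqP => [<-|_].
    rewrite !mulr1n [RHS]mulrAC -polyCM mulfV // polyC1 mul1r.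
    by rewrite [w i * _]mulrC mulfK.
  by rewrite !mulr0n !sub0r mulrN mulNr !polyCM.
rewrite /char_poly E !det_mulmx !det_diag mulrAC -big_split /=.
rewrite big1 ?mul1r // => i _; rewrite !mxE -polyCM mulfV //.
Qed.
Lemma zip_rot (T : Type) (y x : T) q :
  zip (y :: q) (rcons q x) = rcons (zip (y :: q) q) (last y q, x).
Proof. by elim: q y => [|z q IH] y //=; rewrite IH. Qed.

Section PartA.
Variables (R : realType) (n : nat) (e t : rel 'I_n) (root : 'I_n).
Local Notation V := 'I_n.
Local Notation C := R[i].
Hypothesis esym : symmetric e.
Hypothesis eirr : irreflexive e.
Hypothesis ST : spanning_tree e t.
Hypothesis Hnorm : forall u v, e u v -> tree_le t root u v \/ tree_le t root v u.

Lemma tsym : symmetric t. Proof. by case: ST. Qed.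
Lemma tsub : subrel t e. Proof. by case: ST => _ []. Qed.
Lemma tirr : irreflexive t.
Proof. by move=> x; apply/negP => /tsub; rewrite eirr. Qed.
Lemma tconn x y : connect t x y. Proof. by case: ST => _ [_ []]. Qed.
Lemma tnocyc c : ~ is_cycle t c. Proof. by case: ST => _ [_ [_]]. Qed.

Lemma tpath_uniq x p q :
  path t x p -> path t x q -> last x p = last x q ->
  uniq (x :: p) -> uniq (x :: q) -> p = q.
Proof. exact: (tree_path_uniq tsym tnocyc). Qed.

Definition pathprod (chi : V -> V -> C) x p : C :=
  \prod_(pr <- zip (x :: p) p) chi pr.1 pr.2.

Lemma pathprod_nil chi x : pathprod chi x [::] = 1.
Proof. by rewrite /pathprod big_nil. Qed.

Lemma pathprod_cons chi x y p :
  pathprod chi x (y :: p) = chi x y * pathprod chi y p.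
Proof. by rewrite /pathprod /= big_cons. Qed.

Lemma pathprod_cat chi x p1 p2 :
  pathprod chi x (p1 ++ p2) = pathprod chi x p1 * pathprod chi (last x p1) p2.
Proof.
elim: p1 x => [|y p1 IH] x /=; first by rewrite pathprod_nil mul1r.
by rewrite !pathprod_cons IH mulrA.
Qed.

Lemma cycle_gain_cons chi x q :
  cycle_gain chi (x :: q) = pathprod chi x q * chi (last x q) x.
Proof. by rewrite /cycle_gain rot1_cons zip_rot big_rcons. Qed.

Lemma pathprod_neq0 chi (Tg : T_gain e chi) x p :
  path t x p -> pathprod chi x p != 0.
Proof.
elim: p x => [|y p IH] x /=; first by rewrite pathprod_nil oner_eq0.
case/andP => txy py; rewrite pathprod_cons mulf_neq0 ?IH //.
have [h _] := Tg x y (tsub txy); by rewrite -normr_eq0 h oner_eq0.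
Qed.

Lemma exP v : exists p, [&& path t root p, last root p == v & uniq (root :: p)].
Proof.
have /connectP [p hp ->] := tconn root v.
case: (shortenP hp) => p' hp' up' _; exists p'; by rewrite hp' eqxx up'.
Qed.

Definition P v := xchoose (exP v).

Lemma Pspec v : [/\ path t root (P v), last root (P v) = v & uniq (root :: P v)].
Proof.
by have /and3P [h1 /eqP h2 h3] := xchooseP (exP v); split.
Qed.

Lemma P_unique v p : path t root p -> last root p = v -> uniq (root :: p) -> P v = p.
Proof.
have [h1 h2 h3] := Pspec v => hp hl hu.
by apply: (tpath_uniq h1 hp) => //; rewrite h2 hl.
Qed.

Definition dd chi v := pathprod chi root (P v).

Lemma dd_neq0 chi (Tg : T_gain e chi) v : dd chi v != 0.
Proof. by have [h _ _] := Pspec v; exact: pathprod_neq0. Qed.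

Lemma split_uniq (x : V) p1 p2 : uniq (x :: p1 ++ p2) -> uniq (last x p1 :: p2).
Proof.
rewrite -cat_cons cat_uniq => /and3P [_ hn u2] /=; rewrite u2 andbT.
apply: contra hn => h; apply/hasP; exists (last x p1) => //; exact: mem_last.
Qed.

Lemma dd_tree chi (Tg : T_gain e chi) u v : t u v -> dd chi v = dd chi u * chi u v.
Proof.
move=> tuv; rewrite /dd.
have [hp hl hu] := Pspec u.
have [hv|hv] := boolP (v \in root :: P u); last first.
  rewrite (@P_unique v (rcons (P u) v)).
  - by rewrite -cats1 pathprod_cat hl pathprod_cons pathprod_nil mulr1.
  - by rewrite rcons_path hp hl.
  - by rewrite last_rcons.
  - by rewrite -rcons_cons rcons_uniq hv hu.
move: hp hl hu; case/splitPl: hv => p1 p2 lv hp hl hu.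
move: hp; rewrite cat_path => /andP [hp1 hp2].
have Pv : P v = p1 by apply: P_unique; rewrite // -cat_cons cat_uniq in hu; case/and3P: hu.
have uv : u != v by apply: contraTneq tuv => ->; rewrite tirr.
have p2E : p2 = [:: u].
  apply: (@tpath_uniq v).
  - by rewrite -lv.
  - by rewrite /= (tsym v u) tuv.
  - by rewrite -lv -last_cat hl.
  - by rewrite -lv; exact: split_uniq.
  - by rewrite /= inE eq_sym uv.
rewrite Pv p2E pathprod_cat pathprod_cons pathprod_nil mulr1 lv.
have [h1 h2] := Tg _ _ (tsub tuv).
rewrite h2 -mulrA mulVf ?mulr1 //.
by rewrite -normr_eq0 h1 oner_eq0.
Qed.

Lemma dd_nontree chi (Tg : T_gain e chi) s' t' z :
  nontree_pair e t root (s', t') -> fund_cycle_gain_is t chi (s', t') z ->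
  dd chi t' * chi t' s' = dd chi s' * z.
Proof.
move=> [/= est nt [p [hp hl hu hs]]] hf.
move: hp hl hu; case/splitPl: hs => p1 p2 ls hp hl hu.
move: (hp); rewrite cat_path => /andP [hp1 hp2].
have Ps : P s' = p1 by apply: P_unique; rewrite // -cat_cons cat_uniq in hu; case/and3P: hu.
have Pt : P t' = p1 ++ p2 by apply: P_unique.
have := hf p2; rewrite /= -ls => /(_ hp2); rewrite -last_cat => /(_ hl).
move/(_ (split_uniq hu)); rewrite cycle_gain_cons => <-.
have lt : last s' p2 = t' by rewrite -ls -last_cat.
by rewrite ls lt /dd Ps Pt pathprod_cat ls mulrA.
Qed.

Definition Nz chi u v := dd chi u * chi u v / dd chi v.

Lemma Nz_tree chi (Tg : T_gain e chi) u v : t u v -> Nz chi u v = 1.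
Proof.
move=> tuv; rewrite /Nz (dd_tree Tg tuv) mulfV // mulf_neq0 ?dd_neq0 //.
have [h _] := Tg _ _ (tsub tuv); by rewrite -normr_eq0 h oner_eq0.
Qed.

Lemma Nz_inv chi (Tg : T_gain e chi) u v : e u v -> Nz chi u v = (Nz chi v u)^-1.
Proof.
move=> euv; have [h1 h2] := Tg _ _ euv.
have c0 : chi u v != 0 by rewrite -normr_eq0 h1 oner_eq0.
have d1 := dd_neq0 Tg u; have d2 := dd_neq0 Tg v.
rewrite /Nz h2; field; by rewrite d1 c0 d2.
Qed.

Variables (k : nat) (cyc : 'I_k -> V * V).
Hypothesis Hcyc : forall p, nontree_pair e t root p -> exists j, cyc j = p.

Lemma Nz_det (c : 'I_k -> R) chi1 chi2 :
  A_T e t cyc c chi1 -> A_T e t cyc c chi2 ->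
  forall u v, e u v -> Nz chi1 u v = Nz chi2 u v.
Proof.
move=> [T1 F1] [T2 F2].
have key : forall u v, nontree_pair e t root (u, v) -> Nz chi1 v u = Nz chi2 v u.
  move=> u v hnt; have [j hj] := Hcyc hnt.
  have G1 := F1 j; have G2 := F2 j; rewrite hj in G1 G2.
  rewrite /Nz (dd_nontree T1 hnt G1) (dd_nontree T2 hnt G2).
  by rewrite ![dd _ u * _]mulrC !mulfK ?(dd_neq0 T1) ?(dd_neq0 T2).
move=> u v euv.
have [tuv|ntuv] := boolP (t u v); first by rewrite !Nz_tree.
have ntvu : ~~ t v u by rewrite tsym.
case: (Hnorm euv) => hle.
  by rewrite (Nz_inv T1) // (Nz_inv T2) // key //; split.
by apply: key; split; rewrite // esym.
Qed.

Lemma partA (c : 'I_k -> R) chi1 chi2 :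
  A_T e t cyc c chi1 -> A_T e t cyc c chi2 ->
  char_poly (gain_adj e chi1) = char_poly (gain_adj e chi2).
Proof.
move=> A1 A2; have T1 := A1.1; have T2 := A2.1.
apply: (@similar_charpoly _ _ _ _ (fun v => dd chi2 v / dd chi1 v)).
  by move=> i; rewrite mulf_neq0 ?invr_eq0 ?dd_neq0.
move=> i j; rewrite !mxE; case: ifP => eij; last by rewrite mul0r mulr0.
have := Nz_det A1 A2 eij; rewrite /Nz => h.
have d1i := dd_neq0 T1 i; have d1j := dd_neq0 T1 j.
have d2i := dd_neq0 T2 i; have d2j := dd_neq0 T2 j.
have -> : chi1 i j * (dd chi2 j / dd chi1 j) =
   (dd chi1 i * chi1 i j / dd chi1 j) * dd chi2 j / dd chi1 i.
  by field; rewrite ?d1i ?d1j.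
by rewrite h; field; rewrite ?d1i ?d1j ?d2i ?d2j.
Qed.

End PartA.

Theorem lemma3p2 (R : realType) (n : nat) (e : rel 'I_n) (t : rel 'I_n)
  (root : 'I_n)
  (cyc : 'I_(n_edges e - n + 1) -> 'I_n * 'I_n)
  (r s : 'I_(n_edges e - n + 1) -> R) :
  simple_graph e -> connected_graph e ->
  normal_spanning_tree e t root ->
  injective cyc ->
  (forall p, nontree_pair e t root p <-> exists j, cyc j = p) ->
  in_I r -> in_I s -> r <> s ->
  (exists phi psi : 'I_n -> 'I_n -> R[i],
     A_T e t cyc r phi /\ A_T e t cyc s psi /\
     forall C : seq 'I_n, is_cycle e C ->
       'Re (cycle_gain phi C) = 'Re (cycle_gain psi C)) ->
  forall phi1 phi2 : 'I_n -> 'I_n -> R[i],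
    (A_T e t cyc r phi1 \/ A_T e t cyc s phi1) ->
    (A_T e t cyc r phi2 \/ A_T e t cyc s phi2) ->
    char_poly (gain_adj e phi1) = char_poly (gain_adj e phi2).
Proof.
move=> [esym eirr] _ [ST Hnorm] _ Hcyc _ _ _ [phi [psi [Aphi [Apsi Hre]]]].
move=> phi1 phi2 H1 H2.
have Hc : forall p, nontree_pair e t root p -> exists j, cyc j = p.
  by move=> p /Hcyc.
have PB : char_poly (gain_adj e phi) = char_poly (gain_adj e psi).
  exact: (partB esym eirr Aphi.1 Apsi.1 Hre).
have cp : forall chi, A_T e t cyc r chi \/ A_T e t cyc s chi ->
    char_poly (gain_adj e chi) = char_poly (gain_adj e phi).
  move=> chi [A|A].
    exact: (partA esym eirr ST Hnorm Hc A Aphi).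
  rewrite PB; exact: (partA esym eirr ST Hnorm Hc A Apsi).
by rewrite (cp _ H1) (cp _ H2).
Qed.
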